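(* Let $(P,\preceq)$ be a poset and $\mathcal{X}:=\{X\subseteq P\mid (X,\preceq)\text{ is well-ordered}\}$. Let $f:\mathcal{X}\to\mathcal{X}$ satisfy: for all $X,X'\in\mathcal{X}$ and all $y\in f(X)\mathbin{\triangle}f(X')$ there exists $x\in X\mathbin{\triangle}X'$ with $x\prec y$. Then $f$ has a unique fixed point. Moreover, this fixed point equals $X_{\hat\alpha}$ for some ordinal $\hat\alpha$, where $X_0=\emptyset$; for every ordinal $\alpha$, $X_{\alpha+1}=X_\alpha$ if $f(X_\alpha)\setminus X_\alpha=\emptyset$ and $X_{\alpha+1}=X_\alpha\cup\{\min(f(X_\alpha)\setminus X_\alpha)\}$ otherwise; and for nonzero limit ordinals $\alpha$, $X_\alpha=\bigcup_{\beta<\alpha}X_\beta$.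
   Context: $X\mathbin{\triangle}Y=(X\setminus Y)\cup(Y\setminus X)$ is the symmetric difference. $x\prec y$ means $x\preceq y$ and $x\neq y$. A poset is well-ordered if every nonempty subset has a least element. *)

(* Defs.v *)
From mathcomp Require Import all_boot all_order.
Set Implicit Arguments. Unset Strict Implicit. Unset Printing Implicit Defensive.
Import Order.Theory.
Local Open Scope order_scope.

Section Defs.
Context {d : Order.disp_t} {P : porderType d}.

Definition well_ordered (X : P -> Prop) : Prop :=
  forall S : P -> Prop, (forall x, S x -> X x) -> (exists x, S x) ->
    exists m, S m /\ forall s, S s -> m <= s.

Definition WO := {X : P -> Prop | well_ordered X}.

Definition symdiff (X Y : P -> Prop) : P -> Prop :=
  fun x => (X x /\ ~ Y x) \/ (Y x /\ ~ X x).

Definition contractive (f : WO -> WO) : Prop :=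
  forall (X X' : WO) (y : P), symdiff (sval (f X)) (sval (f X')) y ->
    exists x, symdiff (sval X) (sval X') x /\ x < y.

Definition is_min (S : P -> Prop) (m : P) : Prop :=
  S m /\ forall s, S s -> m <= s.

(* B = X_{alpha+1} when A = X_alpha *)
Definition succ_step (f : WO -> WO) (A B : WO) : Prop :=
  let D := fun x => sval (f A) x /\ ~ sval A x in
  ((forall x, ~ D x) /\ sval B = sval A) \/
  (exists m, is_min D m /\ sval B = (fun x => sval A x \/ x = m)).

End Defs.

(* lt is a strict well-order on I (I together with lt represents an ordinal) *)
Definition strict_wellorder (I : Type) (lt : I -> I -> Prop) : Prop :=
  (forall i, ~ lt i i) /\
  (forall i j k, lt i j -> lt j k -> lt i k) /\
  (forall i j, lt i j \/ i = j \/ lt j i) /\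
  well_founded lt.

Definition transfinite_iter {d : Order.disp_t} {P : porderType d}
    (f : @WO d P -> @WO d P) (I : Type) (lt : I -> I -> Prop)
    (X : I -> @WO d P) : Prop :=
  forall i,
    ((forall j, ~ lt j i) -> sval (X i) = (fun _ => False)) /\
    (forall j, lt j i -> (forall k, ~ (lt j k /\ lt k i)) ->
       succ_step f (X j) (X i)) /\
    ((exists j, lt j i) -> (forall j, lt j i -> exists k, lt j k /\ lt k i) ->
       sval (X i) = (fun x => exists j, lt j i /\ sval (X j) x)).

(* Main.v *)
Require Import Defs.
From mathcomp Require Import all_boot all_order.
From Stdlib Require Import Classical FunctionalExtensionality PropExtensionality ProofIrrelevance.
Set Implicit Arguments. Unset Strict Implicit. Unset Printing Implicit Defensive.
Import Order.Theory.
Local Open Scope order_scope.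

Lemma wo_sub {d} {P : porderType d} (X Y : P -> Prop) :
  well_ordered X -> (forall x, Y x -> X x) -> well_ordered Y.
Proof. move=> H sub S SY ne; apply: H ne => x /SY; exact: sub. Qed.

Lemma wo_total {d} {P : porderType d} (X : P -> Prop) a b :
  well_ordered X -> X a -> X b -> a <= b \/ b <= a.
Proof.
move=> H Xa Xb.
have [||m [Sm Hm]] := H (fun x => x = a \/ x = b).
- by move=> x [->|->].
- by exists a; left.
- case: Sm => E; subst m; [left; apply: Hm; right | right; apply: Hm; left] => //.
Qed.

Lemma wo_tot_lt {d} {P : porderType d} (X : P -> Prop) a b :
  well_ordered X -> X a -> X b -> ~ a < b -> b <= a.
Proof.
move=> H Xa Xb nab; case: (wo_total H Xa Xb) => // ab.
case: (eqVneq a b) => [->//|nE]; exfalso; apply: nab; by rewrite lt_neqAle nE ab.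
Qed.

Lemma WO_eq {d} {P : porderType d} (A B : @WO d P) : (forall x, sval A x <-> sval B x) -> A = B.
Proof.
case: A B => [A hA] [B hB] /= H.
have E : A = B by apply: functional_extensionality => x; apply: propositional_extensionality.
subst; congr exist; apply: proof_irrelevance.
Qed.

Definition restrict {d} {P : porderType d} (W : @WO d P) (j : P) : @WO d P :=
  exist _ (fun x => sval W x /\ x < j)
    (wo_sub (proj2_sig W) (fun x (h : sval W x /\ x < j) => proj1 h)).

Definition Dset {d} {P : porderType d} (f : @WO d P -> @WO d P) (A : @WO d P) :=
  fun x => sval (f A) x /\ ~ sval A x.

Definition good {d} {P : porderType d} (f : @WO d P -> @WO d P) (G : @WO d P) :=
  forall j, sval G j -> is_min (Dset f (restrict G j)) j.

Lemma is_min_uniq {d} {P : porderType d} (S : P -> Prop) a b : is_min S a -> is_min S b -> a = b.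
Proof. move=> [Sa Ha] [Sb Hb]; apply/eqP; rewrite eq_le Ha ?Hb //. Qed.

Lemma fixed_good {d} {P : porderType d} (f : @WO d P -> @WO d P) (Hf : contractive f) Z :
  f Z = Z -> good f Z.
Proof.
move=> fZ j Zj; have hwo := proj2_sig Z.
split.
- split; last by case=> _; rewrite ltxx.
  apply: NNPP => nj.
  have [x [Hx xj]] : exists x, symdiff (sval Z) (sval (restrict Z j)) x /\ x < j.
    by apply: (Hf Z (restrict Z j) j); left; rewrite fZ; split.
  case: Hx => [[Zx nSx]|[[Zx xj'] nZx]]; [by apply: nSx | by apply: nZx].
- move=> y [fSy nSy].
  case: (classic (sval Z y)) => Zy.
  + exact: (wo_tot_lt hwo Zy Zj (fun yj => nSy (conj Zy yj))).
  + have [x [Hx xy]] : exists x, symdiff (sval (restrict Z j)) (sval Z) x /\ x < y.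
      by apply: (Hf (restrict Z j) Z y); left; rewrite fZ; split.
    case: Hx => [[[Zx xj] nZx] | [Zx nSx]]; first by [].
    have jx : j <= x := wo_tot_lt hwo Zx Zj (fun xj => nSx (conj Zx xj)).
    exact: ltW (le_lt_trans jx xy).
Qed.

Lemma fixed_step {d} {P : porderType d} (f : @WO d P -> @WO d P) (Hf : contractive f) Z Z' a :
  f Z = Z -> f Z' = Z' -> is_min (fun x => sval Z x /\ ~ sval Z' x) a ->
  exists x, (sval Z' x /\ ~ sval Z x) /\ x < a.
Proof.
move=> fZ fZ' [Aa Ha].
have [x [Hx xa]] : exists x, symdiff (sval Z) (sval Z') x /\ x < a.
  by apply: (Hf Z Z' a); left; rewrite fZ fZ'.
case: Hx => [Ax|Bx]; last by exists x.
by have := lt_le_trans xa (Ha _ Ax); rewrite ltxx.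
Qed.

Lemma fixed_noA {d} {P : porderType d} (f : @WO d P -> @WO d P) (Hf : contractive f) Z Z' :
  f Z = Z -> f Z' = Z' -> forall x, ~ (sval Z x /\ ~ sval Z' x).
Proof.
move=> fZ fZ' x Ax.
have [||a Ha] := proj2_sig Z (fun x => sval Z x /\ ~ sval Z' x); [by move=> ? [] | by exists x|].
have [x1 [Bx1 x1a]] := fixed_step Hf fZ fZ' Ha.
have [||b Hb] := proj2_sig Z' (fun x => sval Z' x /\ ~ sval Z x); [by move=> ? [] | by exists x1|].
have [x2 [Ax2 x2b]] := fixed_step Hf fZ' fZ Hb.
have h1 := proj2 Ha _ Ax2. have h2 := proj2 Hb _ Bx1.
have := lt_trans (le_lt_trans h1 (lt_le_trans x2b h2)) x1a; by rewrite ltxx.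
Qed.

Lemma fixed_uniq {d} {P : porderType d} (f : @WO d P -> @WO d P) (Hf : contractive f) Z Z' :
  f Z = Z -> f Z' = Z' -> Z = Z'.
Proof.
move=> fZ fZ'; apply: WO_eq => x; split => h; apply: NNPP => h'.
- exact: (fixed_noA Hf fZ fZ' (conj h h')).
- exact: (fixed_noA Hf fZ' fZ (conj h h')).
Qed.

Lemma sig_eqP {T : Type} (Q : T -> Prop) (a b : {x | Q x}) : sval a = sval b -> a = b.
Proof. case: a b => [a ha] [b hb] /= E; subst; congr exist; apply: proof_irrelevance. Qed.

Definition ltI {d} {P : porderType d} (Z : @WO d P) (i j : option {x | sval Z x}) : Prop :=
  match i, j with
  | Some a, Some b => sval a < sval b
  | Some _, None => True
  | None, _ => False
  end.

Definition XI {d} {P : porderType d} (Z : @WO d P) (i : option {x | sval Z x}) : @WO d P :=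
  match i with Some a => restrict Z (sval a) | None => Z end.

Lemma ltI_swo {d} {P : porderType d} (Z : @WO d P) : strict_wellorder (ltI (Z:=Z)).
Proof.
have hwo := proj2_sig Z.
split; [|split; [|split]].
- by case=> [a|] //=; rewrite ltxx.
- by case=> [a|] [b|] [c|] //=; apply: lt_trans.
- case=> [a|] [b|] /=; [| by left | by right; right | by right; left].
  have [h|h] := wo_total hwo (proj2_sig a) (proj2_sig b).
  + move: h; rewrite le_eqVlt => /orP [/eqP E|h]; last by left.
    by right; left; congr Some; apply: sig_eqP.
  + move: h; rewrite le_eqVlt => /orP [/eqP E|h]; last by right; right.
    by right; left; congr Some; apply: sig_eqP.
- have accS : forall a, Acc (ltI (Z:=Z)) (Some a).
    move=> a; apply: NNPP => na.
    pose S := (fun x => exists a : {x | sval Z x}, sval a = x /\ ~ Acc (ltI (Z:=Z)) (Some a)).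
    have [||m [[a0 [Ea0 na0]] Hm]] := hwo S.
    + move=> x [a1 [E _]]. subst x. exact: (proj2_sig a1).
    + by exists (sval a), a.
    apply: na0; constructor. case=> [b|]; last by []. simpl. move=> ba. apply: NNPP => nb.
    have h := Hm (sval b) (ex_intro _ b (conj erefl nb)).
    rewrite -Ea0 in h. have := lt_le_trans ba h. by rewrite ltxx.
  case=> [a|]; first exact: accS.
  constructor; case=> [a|]; last by []. move=> _; exact: accS.
Qed.
Lemma XI_iter {d} {P : porderType d} (f : @WO d P -> @WO d P) (Hf : contractive f) Z :
  f Z = Z -> transfinite_iter f (ltI (Z:=Z)) (XI (Z:=Z)).
Proof.
move=> fZ; have hwo := proj2_sig Z; have gZ := fixed_good Hf fZ.
move=> i; split; [|split].
- move=> H. apply: functional_extensionality => x; apply: propositional_extensionality.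
  split; last by case.
  case: i H => [a|] H; simpl.
  + move=> [Zx xa]. exact: (H (Some (exist _ x Zx)) xa).
  + move=> Zx; exact: (H (Some (exist _ x Zx)) I).
- move=> j ji nk.
  case: j ji nk => [a|] ji nk; last by case: ji.
  right. exists (sval a). split; first exact: (gZ _ (proj2_sig a)).
  apply: functional_extensionality => x; apply: propositional_extensionality.
  have tot : forall x, sval Z x -> x != sval a -> x < sval a \/ sval a < x.
    move=> y Zy nya.
    case: (wo_total hwo Zy (proj2_sig a)) => h; [left|right].
    * by rewrite lt_neqAle nya h.
    * by rewrite lt_neqAle eq_sym nya h.
  case: i ji nk => [b|] ji nk; simpl; split.
  + move=> [Zx xb]. case: (eqVneq x (sval a)) => [E|nxa]; first by right.
    left; split; first exact: Zx.
    case: (tot x Zx nxa) => // ax; exfalso.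
    exact: (nk (Some (exist _ x Zx)) (conj ax xb)).
  + case => [[Zx xa]|E]; first by split; [exact: Zx | exact: (lt_trans xa ji)].
    rewrite E; split; [exact: (proj2_sig a) | exact: ji].
  + move=> Zx. case: (eqVneq x (sval a)) => [E|nxa]; first by right.
    left; split; first exact: Zx.
    case: (tot x Zx nxa) => // ax; exfalso.
    exact: (nk (Some (exist _ x Zx)) (conj ax I)).
  + case => [[Zx _]|E]; first exact: Zx.
    rewrite E; exact: (proj2_sig a).
- move=> _ lim.
  apply: functional_extensionality => x; apply: propositional_extensionality.
  case: i lim => [b|] lim; simpl; split.
  + move=> [Zx xb]. have [k [xk ki]] := lim (Some (exist _ x Zx)) xb.
    case: k xk ki => [c|] xk ki; last by case: ki.
    exists (Some c); split; first exact: ki.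
    simpl; split; [exact: Zx | exact: xk].
  + move=> [j [ji Xjx]]. case: j ji Xjx => [c|] ji Xjx; last by case: ji.
    case: Xjx => Zx xc. split; [exact: Zx | exact: (lt_trans xc ji)].
  + move=> Zx. have [k [xk ki]] := lim (Some (exist _ x Zx)) I.
    case: k xk ki => [c|] xk ki; last by case: xk.
    exists (Some c); split; first exact: ki.
    simpl; split; [exact: Zx | exact: xk].
  + move=> [j [ji Xjx]]. case: j ji Xjx => [c|] ji Xjx; last by case: ji.
    exact: (proj1 Xjx).
Qed.
Lemma good_L {d} {P : porderType d} (f : @WO d P -> @WO d P) (G H : @WO d P) b :
  good f G -> good f H -> is_min (fun x => sval H x /\ ~ sval G x) b ->
  (forall g, sval G g -> sval H g /\ g < b) \/ exists a, (sval G a /\ ~ sval H a) /\ a < b.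
Proof.
move=> gG gH [[Hb nGb] bmin].
have hT : forall x, sval H x -> x < b -> sval G x.
  move=> x Hx xb; apply: NNPP => nGx.
  have := lt_le_trans xb (bmin x (conj Hx nGx)); by rewrite ltxx.
case: (classic (forall g, sval G g -> sval H g /\ g < b)) => [h|h]; first by left.
right.
have [||a' [[Ga' na'] amin]] := proj2_sig G (fun x => sval G x /\ ~ (sval H x /\ x < b)).
- by move=> x [].
- apply: NNPP => ne; apply: h => g Gg; apply: NNPP => ng; apply: ne; by exists g.
have below : forall x, sval G x -> x < a' -> sval H x /\ x < b.
  move=> x Gx xa; apply: NNPP => nx.
  have := lt_le_trans xa (amin x (conj Gx nx)); by rewrite ltxx.
case: (classic (forall t, sval H t -> t < b -> t < a')) => [h2|h2].
- have E : restrict G a' = restrict H b.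
    apply: WO_eq => x /=; split.
    + by move=> [Gx xa]; apply: below.
    + by move=> [Hx xb]; split; [apply: hT | apply: h2].
  have m1 := gG a' Ga'. have m2 := gH b Hb. rewrite E in m1.
  have E2 := is_min_uniq m1 m2. by subst a'.
- have [t Ht] : exists t, ~ (sval H t -> t < b -> t < a').
    apply: NNPP => ne; apply: h2 => t; apply: NNPP => nt; apply: ne; by exists t.
  have Htt : sval H t by apply: NNPP => n; apply: Ht => /n.
  have tb : t < b by apply: NNPP => n; apply: Ht => _ /n.
  have nta : ~ t < a' by move=> ta; apply: Ht.
  have Gt := hT t Htt tb.
  have a't := wo_tot_lt (proj2_sig G) Gt Ga' nta.
  have a'b := le_lt_trans a't tb.
  exists a'; split => //; split => // Ha'; apply: na'; by split.
Qed.
Definition Seg {d} {P : porderType d} (G H : @WO d P) :=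
  (forall x, sval G x -> sval H x) /\
  (forall h g, sval H h -> sval G g -> h < g -> sval G h).

Lemma good_comp {d} {P : porderType d} (f : @WO d P -> @WO d P) (G H : @WO d P) :
  good f G -> good f H -> Seg G H \/ Seg H G.
Proof.
move=> gG gH.
case: (classic (exists x, sval H x /\ ~ sval G x)) => [[x0 Bx0]|nB].
- have [||b Hb] := proj2_sig H (fun x => sval H x /\ ~ sval G x); [by move=> ? [] | by exists x0 |].
  case: (classic (exists x, sval G x /\ ~ sval H x)) => [[x1 Ax1]|nA].
  + exfalso.
    have [||a Ha] := proj2_sig G (fun x => sval G x /\ ~ sval H x); [by move=> ? [] | by exists x1 |].
    case: (good_L gG gH Hb) => [h|[a' [Aa' a'b]]]; first by case: Ax1 => G1 nH1; apply: nH1; case: (h _ G1).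
    case: (good_L gH gG Ha) => [h|[b' [Bb' b'a]]]; first by case: Bx0 => H0 nG0; apply: nG0; case: (h _ H0).
    have h1 := proj2 Ha _ Aa'. have h2 := proj2 Hb _ Bb'.
    have := lt_trans (le_lt_trans h1 (lt_le_trans a'b h2)) b'a; by rewrite ltxx.
  + left; split.
    * move=> x Gx; apply: NNPP => nHx; apply: nA; by exists x.
    * move=> h g Hh Gg hg; apply: NNPP => nGh.
      have bh := proj2 Hb _ (conj Hh nGh).
      case: (good_L gG gH Hb) => [hh|[a' [Aa' _]]]; last by apply: nA; exists a'.
      have gb := proj2 (hh g Gg).
      have := lt_trans (le_lt_trans bh hg) gb; by rewrite ltxx.
- right; split.
  + move=> x Hx; apply: NNPP => nGx; apply: nB; by exists x.
  + move=> g h Gg Hh gh; apply: NNPP => nHg.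
    have [||a Ha] := proj2_sig G (fun x => sval G x /\ ~ sval H x); [by move=> ? [] | by exists g |].
    have ag := proj2 Ha _ (conj Gg nHg).
    case: (good_L gH gG Ha) => [hh|[b' [Bb' _]]]; last by apply: nB; exists b'.
    have ha := proj2 (hh h Hh).
    have := lt_trans (le_lt_trans ag gh) ha; by rewrite ltxx.
Qed.

Definition Upred {d} {P : porderType d} (f : @WO d P -> @WO d P) : P -> Prop :=
  fun x => exists G : @WO d P, good f G /\ sval G x.

Lemma U_wo {d} {P : porderType d} (f : @WO d P -> @WO d P) : well_ordered (Upred f).
Proof.
move=> S SU [s Ss].
have [G [gG Gs]] := SU s Ss.
have [||m [[Sm Gm] mmin]] := proj2_sig G (fun x => S x /\ sval G x); [by move=> ? [] | by exists s |].
exists m; split => // s' Ss'.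
have [H [gH Hs']] := SU s' Ss'.
case: (good_comp gG gH) => [[sub seg]|[sub seg]].
- case: (classic (s' < m)) => [sm|nsm].
  + have Gs' := seg _ _ Hs' Gm sm.
    have := lt_le_trans sm (mmin _ (conj Ss' Gs')); by rewrite ltxx.
  + exact: (wo_tot_lt (proj2_sig H) Hs' (sub _ Gm) nsm).
- exact: (mmin _ (conj Ss' (sub _ Hs'))).
Qed.

Definition UU {d} {P : porderType d} (f : @WO d P -> @WO d P) : @WO d P :=
  exist _ (Upred f) (@U_wo d P f).

Lemma U_seg {d} {P : porderType d} (f : @WO d P -> @WO d P) (G : @WO d P) :
  good f G -> forall x g, Upred f x -> sval G g -> x < g -> sval G x.
Proof.
move=> gG x g [H [gH Hx]] Gg xg.
case: (good_comp gG gH) => [[sub seg]|[sub seg]]; [exact: (seg x g Hx Gg xg) | exact: sub].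
Qed.

Lemma U_good {d} {P : porderType d} (f : @WO d P -> @WO d P) : good f (UU f).
Proof.
move=> j [G [gG Gj]].
have E : restrict (UU f) j = restrict G j.
  apply: WO_eq => x /=; split.
  - move=> [Ux xj]; split => //; exact: (U_seg gG Ux Gj xj).
  - move=> [Gx xj]; split => //; by exists G.
rewrite E; exact: gG.
Qed.
Lemma good_sub {d} {P : porderType d} (f : @WO d P -> @WO d P) (Hf : contractive f) G :
  good f G -> forall j, sval G j -> sval (f G) j.
Proof.
move=> gG j Gj; have [[fj _] _] := gG j Gj.
apply: NNPP => nj.
have [x [Hx xj]] : exists x, symdiff (sval (restrict G j)) (sval G) x /\ x < j.
  by apply: (Hf (restrict G j) G j); left; split.
case: Hx => [[[Gx' _] nGx]|[Gx nS]]; first by apply: nGx.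
by apply: nS.
Qed.

Lemma good_above {d} {P : porderType d} (f : @WO d P -> @WO d P) (Hf : contractive f) G :
  good f G -> forall y j, sval (f G) y -> ~ sval G y -> sval G j -> j < y.
Proof.
move=> gG y j fy nGy Gj; have hwo := proj2_sig G.
have [_ jmin] := gG j Gj.
have jy : j <= y.
  case: (classic (sval (f (restrict G j)) y)) => [h|h].
  - apply: jmin; split => // [[]] //.
  - have [x [Hx xy]] : exists x, symdiff (sval G) (sval (restrict G j)) x /\ x < y.
      by apply: (Hf G (restrict G j) y); left; split.
    case: Hx => [[Gx nSx]|[[Gx _] nGx]]; last by exfalso; exact: nGx Gx.
    have jx := wo_tot_lt hwo Gx Gj (fun xj => nSx (conj Gx xj)).
    exact: ltW (le_lt_trans jx xy).
rewrite lt_neqAle jy andbT; apply/eqP => E; subst; by apply: nGy.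
Qed.

Lemma U_fixed {d} {P : porderType d} (f : @WO d P -> @WO d P) (Hf : contractive f) :
  f (UU f) = UU f.
Proof.
have gU := @U_good d P f.
apply: WO_eq => x; split; last exact: (good_sub Hf gU).
move=> fx; apply: NNPP => nUx.
have [||m [[fm nUm] mmin]] := proj2_sig (f (UU f)) (Dset f (UU f)); [by move=> ? [] | by exists x |].
have sub : forall y, sval (UU f) y \/ y = m -> sval (f (UU f)) y.
  by move=> y [Uy|->]; [exact: (good_sub Hf gU) |].
pose G' : @WO d P := exist _ (fun y => sval (UU f) y \/ y = m) (wo_sub (proj2_sig (f (UU f))) sub).
have gG' : good f G'.
  move=> j [Uj|Ej].
  - have E : restrict G' j = restrict (UU f) j.
      apply: WO_eq => y /=; split.
      + move=> [[Uy|Ey] yj]; first by split.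
        subst y; have := lt_trans yj (good_above Hf gU fm nUm Uj); by rewrite ltxx.
      + by move=> [Uy yj]; split => //; left.
    rewrite E; exact: gU.
  - subst j.
    have E : restrict G' m = UU f.
      apply: WO_eq => y /=; split.
      + move=> [[Uy|Ey] ym] //; subst y; by rewrite ltxx in ym.
      + move=> Uy; split; [by left | exact: (good_above Hf gU fm nUm Uy)].
    rewrite E; by split.
apply: nUm; exists G'; split => //; by right.
Qed.

Theorem theorem6p2 (d : Order.disp_t) (P : porderType d)
  (f : @WO d P -> @WO d P) :
  contractive f ->
  (exists! Z : @WO d P, f Z = Z) /\
  (forall Z : @WO d P, f Z = Z ->
     exists (I : Type) (lt : I -> I -> Prop) (X : I -> @WO d P) (alpha : I),
       strict_wellorder lt /\ transfinite_iter f lt X /\ X alpha = Z).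
Proof.
move=> Hf; split.
- exists (UU f); split; first exact: U_fixed.
  move=> Z' fZ'; exact: (fixed_uniq Hf (U_fixed Hf) fZ').
- move=> Z fZ.
  exists (option {x | sval Z x}), (ltI (Z:=Z)), (XI (Z:=Z)), None.
  split; first exact: ltI_swo.
  split; first exact: (XI_iter Hf fZ).
  by [].
Qed.
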